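(* Every almost unperforated Cu-semigroup satisfying (O5) is left-soft separative.
   Context: A Cu-semigroup is a positively ordered commutative monoid satisfying (O1)–(O4): increasing sequences have suprema; each element is the supremum of a $\ll$-increasing sequence; $\ll$ is compatible with addition; suprema of increasing sequences are additive. Here $x\ll y$ means whenever $y\le\sup_n z_n$ for increasing $(z_n)$, $x\le z_m$ for some $m$. (O5): if $x+y\le z$, $x'\ll x$, $y'\ll y$, then there is $c$ with $y'\ll c$ and $x'+c\le z\le x+c$. $\infty x=\sup_n nx$. $x$ is strongly soft if for every $x'\ll x$ there is $t$ with $x'+t\ll x$ and $x'\ll\infty t$; $S_{\mathrm{soft}}$ is the set of strongly soft elements. $S$ is almost unperforated if $(n+1)x\le ny$ for some $n\ge1$ implies $x\le y$. $S$ is left-soft separative if whenever $y,t\in S$, $x\in S_{\mathrm{soft}}$ satisfy $x+t\ll y+t$, $t\ll\infty x$ and $t\ll\infty y$, then $x\ll y$. *)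

(* Defs.v *)
From Stdlib Require Import Arith.

Set Implicit Arguments.

Fixpoint nmul (T : Type) (add : T -> T -> T) (zero : T) (n : nat) (x : T) : T :=
  match n with
  | O => zero
  | S m => add (nmul add zero m x) x
  end.

Section CuDefs.
Variables (T : Type) (le : T -> T -> Prop).

Definition increasing (s : nat -> T) : Prop := forall n, le (s n) (s (S n)).

Definition is_sup (s : nat -> T) (z : T) : Prop :=
  (forall n, le (s n) z) /\ (forall w, (forall n, le (s n) w) -> le z w).

Definition way_below (x y : T) : Prop :=
  forall (s : nat -> T) (z : T), increasing s -> is_sup s z -> le y z ->
    exists m, le x (s m).
End CuDefs.

Record CuSemigroup := {
  cu_carrier :> Type;
  cu_le : cu_carrier -> cu_carrier -> Prop;
  cu_add : cu_carrier -> cu_carrier -> cu_carrier;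
  cu_zero : cu_carrier;
  cu_le_refl : forall x, cu_le x x;
  cu_le_trans : forall x y z, cu_le x y -> cu_le y z -> cu_le x z;
  cu_le_antisym : forall x y, cu_le x y -> cu_le y x -> x = y;
  cu_addA : forall x y z, cu_add x (cu_add y z) = cu_add (cu_add x y) z;
  cu_addC : forall x y, cu_add x y = cu_add y x;
  cu_add0 : forall x, cu_add x cu_zero = x;
  cu_le_add : forall x y z, cu_le x y -> cu_le (cu_add x z) (cu_add y z);
  cu_le0 : forall x, cu_le cu_zero x;
  cu_O1 : forall s, increasing cu_le s -> exists z, is_sup cu_le s z;
  cu_O2 : forall x, exists s, (forall n, way_below cu_le (s n) (s (S n)))
                              /\ is_sup cu_le s x;
  cu_O3 : forall x' x y' y, way_below cu_le x' x -> way_below cu_le y' y ->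
            way_below cu_le (cu_add x' y') (cu_add x y);
  cu_O4 : forall s t a b, increasing cu_le s -> increasing cu_le t ->
            is_sup cu_le s a -> is_sup cu_le t b ->
            is_sup cu_le (fun n => cu_add (s n) (t n)) (cu_add a b)
}.

Section CuProps.
Variable Cu : CuSemigroup.

Local Notation "x <= y" := (cu_le Cu x y).
Local Notation "x << y" := (way_below (cu_le Cu) x y) (at level 70).
Local Notation "x + y" := (cu_add Cu x y).

Definition is_infty (x z : Cu) : Prop :=
  is_sup (cu_le Cu) (fun n => nmul (cu_add Cu) (cu_zero Cu) n x) z.

Definition way_below_infty (x t : Cu) : Prop :=
  exists z, is_infty t z /\ x << z.

Definition O5 : Prop :=
  forall x y z x' y', x + y <= z -> x' << x -> y' << y ->
    exists c, y' << c /\ x' + c <= z /\ z <= x + c.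

Definition strongly_soft (x : Cu) : Prop :=
  forall x', x' << x -> exists t, x' + t << x /\ way_below_infty x' t.

Definition almost_unperforated : Prop :=
  forall (x y : Cu) (n : nat), (1 <= n)%nat ->
    nmul (cu_add Cu) (cu_zero Cu) (S n) x <= nmul (cu_add Cu) (cu_zero Cu) n y ->
    x <= y.

Definition left_soft_separative : Prop :=
  forall x y t : Cu, strongly_soft x ->
    x + t << y + t -> way_below_infty t x -> way_below_infty t y -> x << y.
End CuProps.

(* Main.v *)
Require Import Defs.
From Stdlib Require Import Arith Lia.

Section Aux.
End Aux.

Lemma wb_le (C : CuSemigroup) (x y : C) :
  way_below (cu_le C) x y -> cu_le C x y.
Proof.
  intro H. destruct (H (fun _ => y) y) as [m Hm].
  - intro n. apply cu_le_refl.
  - split; [intro; apply cu_le_refl | intros w Hw; exact (Hw 0)].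
  - apply cu_le_refl.
  - exact Hm.
Qed.

Lemma wb_le_r (C : CuSemigroup) (x y y' : C) :
  way_below (cu_le C) x y -> cu_le C y y' -> way_below (cu_le C) x y'.
Proof.
  intros H Hy s z Hi Hs Hle. apply (H s z Hi Hs). eapply cu_le_trans; eauto.
Qed.

Lemma wb_le_l (C : CuSemigroup) (x' x y : C) :
  cu_le C x' x -> way_below (cu_le C) x y -> way_below (cu_le C) x' y.
Proof.
  intros Hx H s z Hi Hs Hle. destruct (H s z Hi Hs Hle) as [m Hm].
  exists m. eapply cu_le_trans; eauto.
Qed.

Lemma le_add2 (C : CuSemigroup) (a b c d : C) :
  cu_le C a b -> cu_le C c d -> cu_le C (cu_add C a c) (cu_add C b d).
Proof.
  intros H1 H2. eapply cu_le_trans. apply cu_le_add. exact H1.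
  rewrite (cu_addC C b c), (cu_addC C b d). apply cu_le_add. exact H2.
Qed.

Lemma le_addr (C : CuSemigroup) (a b : C) : cu_le C a (cu_add C a b).
Proof.
  rewrite <- (cu_add0 C a) at 1. apply le_add2. apply cu_le_refl. apply cu_le0.
Qed.

Lemma nmul_le (C : CuSemigroup) n (x y : C) :
  cu_le C x y -> cu_le C (nmul (cu_add C) (cu_zero C) n x) (nmul (cu_add C) (cu_zero C) n y).
Proof.
  intro H. induction n; simpl. apply cu_le_refl. apply le_add2; auto.
Qed.

Lemma nmul_addn (C : CuSemigroup) a b (x : C) :
  nmul (cu_add C) (cu_zero C) (a + b) x =
  cu_add C (nmul (cu_add C) (cu_zero C) a x) (nmul (cu_add C) (cu_zero C) b x).
Proof.
  induction b.
  - rewrite Nat.add_0_r. simpl. rewrite cu_add0. reflexivity.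
  - rewrite Nat.add_succ_r. simpl. rewrite IHb. rewrite cu_addA. reflexivity.
Qed.

Lemma nmul_muln (C : CuSemigroup) a b (x : C) :
  nmul (cu_add C) (cu_zero C) (a * b) x =
  nmul (cu_add C) (cu_zero C) a (nmul (cu_add C) (cu_zero C) b x).
Proof.
  induction a.
  - reflexivity.
  - simpl (Datatypes.S a * b). rewrite nmul_addn, IHa. simpl. apply cu_addC.
Qed.

Lemma add4 (C : CuSemigroup) (a b c d : C) :
  cu_add C (cu_add C a b) (cu_add C c d) = cu_add C (cu_add C a c) (cu_add C b d).
Proof.
  rewrite <- !cu_addA. f_equal. rewrite !cu_addA. f_equal. apply cu_addC.
Qed.

Lemma nmul_distr (C : CuSemigroup) n (x y : C) :
  nmul (cu_add C) (cu_zero C) n (cu_add C x y) =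
  cu_add C (nmul (cu_add C) (cu_zero C) n x) (nmul (cu_add C) (cu_zero C) n y).
Proof.
  induction n; simpl. rewrite cu_add0; reflexivity.
  rewrite IHn. apply add4.
Qed.

Lemma nmul_mono_n (C : CuSemigroup) a b (x : C) : a <= b ->
  cu_le C (nmul (cu_add C) (cu_zero C) a x) (nmul (cu_add C) (cu_zero C) b x).
Proof.
  intro H. replace b with (a + (b - a)) by lia. rewrite nmul_addn. apply le_addr.
Qed.

Lemma incr_mono (C : CuSemigroup) (s : nat -> C) :
  increasing (cu_le C) s -> forall i j, i <= j -> cu_le C (s i) (s j).
Proof.
  intros H i j Hij. induction Hij. apply cu_le_refl. eapply cu_le_trans; eauto.
Qed.

Lemma sup_nmul (C : CuSemigroup) (s : nat -> C) (a : C) n :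
  increasing (cu_le C) s -> is_sup (cu_le C) s a ->
  is_sup (cu_le C) (fun j => nmul (cu_add C) (cu_zero C) n (s j))
                   (nmul (cu_add C) (cu_zero C) n a).
Proof.
  intros Hi Hs. induction n; simpl.
  - split; [intro; apply cu_le_refl | intros w Hw; exact (Hw 0)].
  - apply (cu_O4 C (s := fun j => nmul (cu_add C) (cu_zero C) n (s j)) (t := s)); auto.
    intro j. apply nmul_le. apply Hi.
Qed.

Lemma incr_of_wb (C : CuSemigroup) (s : nat -> C) :
  (forall n, way_below (cu_le C) (s n) (s (Datatypes.S n))) -> increasing (cu_le C) s.
Proof. intros H n. apply wb_le. apply H. Qed.

Lemma iter_sep (C : CuSemigroup) (x y t : C) n :
  cu_le C (cu_add C x t) (cu_add C y t) ->
  cu_le C (cu_add C (nmul (cu_add C) (cu_zero C) n x) t)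
          (cu_add C (nmul (cu_add C) (cu_zero C) n y) t).
Proof.
  intro H. induction n; simpl. apply cu_le_refl.
  rewrite <- (cu_addA C _ x t).
  eapply cu_le_trans. apply le_add2. apply cu_le_refl. exact H.
  set (a := nmul (cu_add C) (cu_zero C) n x) in *.
  set (b := nmul (cu_add C) (cu_zero C) n y) in *.
  replace (cu_add C a (cu_add C y t)) with (cu_add C y (cu_add C a t)).
  2:{ rewrite !cu_addA. f_equal. apply cu_addC. }
  replace (cu_add C (cu_add C b y) t) with (cu_add C y (cu_add C b t)).
  2:{ rewrite !cu_addA. f_equal. apply cu_addC. }
  apply le_add2. apply cu_le_refl. exact IHn.
Qed.

Theorem lemma4p7 (S : CuSemigroup) :
  almost_unperforated S -> O5 S -> left_soft_separative S.
Proof.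
  intros AU _ x y t Hsoft Hxt [zx [Hzx Htx]] [zy [Hzy Hty]].
  destruct (cu_O2 S y) as [ys [Hys Hsy]].
  destruct (cu_O2 S t) as [ts [Hts Hst]].
  pose proof (incr_of_wb S ys Hys) as Hyi.
  pose proof (incr_of_wb S ts Hts) as Hti.
  destruct (Hxt (fun n => cu_add S (ys n) (ts n)) (cu_add S y t)) as [n0 Hn0].
  { intro n. apply le_add2; auto. }
  { apply cu_O4; auto. }
  { apply cu_le_refl. }
  set (w := fun n => nmul (cu_add S) (cu_zero S) n (ys n)).
  assert (Hwi : increasing (cu_le S) w).
  { intro n. unfold w. eapply cu_le_trans. apply nmul_le. apply Hyi.
    apply nmul_mono_n. lia. }
  destruct (cu_O1 S Hwi) as [wz Hwz].
  assert (Hzyw : cu_le S zy wz).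
  { apply (proj2 Hzy). intro n.
    apply (proj2 (sup_nmul S ys y n Hyi Hsy)). intro j.
    eapply cu_le_trans. apply nmul_le. apply (incr_mono S ys Hyi j (j + n)). lia.
    eapply cu_le_trans. apply nmul_mono_n with (b := j + n). lia.
    apply (proj1 Hwz (j + n)). }
  destruct (Hty w wz Hwi Hwz Hzyw) as [m Hm]. unfold w in Hm.
  set (N := Nat.max n0 m). set (y' := ys N).
  assert (H1 : cu_le S (cu_add S x t) (cu_add S y' t)).
  { eapply cu_le_trans. exact Hn0. apply le_add2.
    apply incr_mono; auto. unfold N; lia. apply (proj1 Hst). }
  assert (H2 : cu_le S t (nmul (cu_add S) (cu_zero S) m y')).
  { eapply cu_le_trans. exact Hm. apply nmul_le. apply incr_mono; auto. unfold N; lia. }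
  assert (Hxy : cu_le S x y').
  { destruct (cu_O2 S x) as [xs [Hxs Hsx]].
    apply (proj2 Hsx). intro k.
    assert (Hk : way_below (cu_le S) (xs k) x).
    { eapply wb_le_r. apply Hxs. apply (proj1 Hsx). }
    destruct (Hsoft (xs k) Hk) as [t2 [Ht2 [z2 [Hz2 Hw2]]]].
    destruct (Hw2 (fun n => nmul (cu_add S) (cu_zero S) n t2) z2) as [m' Hm'].
    { intro n. simpl. apply le_addr. }
    { exact Hz2. }
    { apply cu_le_refl. }
    set (M := Datatypes.S m').
    assert (HM : cu_le S (xs k) (nmul (cu_add S) (cu_zero S) M t2)).
    { eapply cu_le_trans. exact Hm'. apply nmul_mono_n. unfold M; lia. }
    pose proof (wb_le S _ _ Ht2) as Hx2.
    apply (AU (xs k) y' (M * Datatypes.S m + m)). unfold M; lia.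
    replace (Datatypes.S (M * Datatypes.S m + m)) with (M * Datatypes.S m + Datatypes.S m) by lia.
    rewrite !nmul_addn.
    eapply cu_le_trans. apply le_add2. apply cu_le_refl. apply nmul_le. exact HM.
    rewrite <- nmul_muln. rewrite (Nat.mul_comm (Datatypes.S m) M).
    rewrite <- nmul_distr.
    eapply cu_le_trans. apply nmul_le. exact Hx2.
    eapply cu_le_trans. apply (le_addr S _ t).
    eapply cu_le_trans. apply iter_sep. exact H1.
    apply le_add2. apply cu_le_refl. exact H2. }
  eapply wb_le_l. exact Hxy.
  unfold y'. eapply wb_le_r. apply Hys. apply (proj1 Hsy).
Qed.
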